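(* Let $X=(X_n)_{n\in\mathbb{Z}}$ be a stationary and ergodic sequence of integer-valued random variables. Then exactly one of the following holds: (1) the record graph of $X$ is almost surely connected; or (2) almost surely every connected component of the record graph of $X$ is finite.
   Context: For a sequence $x=(x_n)_{n\in\mathbb{Z}}$, the record map is $R_x(i)=\inf\{n>i: \sum_{l=i}^{n-1}x_l\ge0\}$ if this set is nonempty, and $R_x(i)=i$ otherwise. The record graph has vertex set $\mathbb{Z}$ and a directed edge $i\to R_x(i)$ whenever $R_x(i)\ne i$; connectivity and components are understood in the undirected sense. *)

(* Defs.v *)
From HB Require Import structures.
From mathcomp Require Import all_boot all_order all_algebra.
From mathcomp Require Import all_classical all_reals all_analysis.
From Stdlib Require Import Relations.
Set Implicit Arguments. Unset Strict Implicit. Unset Printing Implicit Defensive.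
Import Order.TTheory GRing.Theory Num.Theory.
Local Open Scope classical_set_scope.
Local Open Scope ring_scope.

Definition psum (x : int -> int) (i n : int) : int :=
  \sum_(k < `|n - i|%N) x (i + k%:Z).

(* [record_edge x i j] : there is a directed edge i -> R_x(i) = j with
   R_x(i) <> i, i.e. the set {n > i : sum_{l=i}^{n-1} x_l >= 0} is nonempty
   and j is its infimum (= its least element). *)
Definition record_edge (x : int -> int) (i j : int) : Prop :=
  [/\ i < j, 0 <= psum x i j &
      forall m : int, i < m -> m < j -> psum x i m < 0].

Definition record_conn (x : int -> int) : relation int :=
  clos_refl_sym_trans int (record_edge x).

Definition record_graph_connected (x : int -> int) : Prop :=
  forall i j : int, record_conn x i j.

Definition record_components_finite (x : int -> int) : Prop :=
  forall i : int, finite_set [set j | record_conn x i j].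

Definition cylinders : set (set (int -> int)) :=
  [set A | exists (n k : int), A = [set y | y n = k]].

Definition path_measurable (A : set (int -> int)) : Prop := <<s cylinders >> A.

Definition shift (y : int -> int) : int -> int := fun n => y (n + 1).

Definition path_of {T : Type} (X : int -> T -> int) (w : T) : int -> int :=
  fun n => X n w.

Definition stationary {d : measure_display} {T : measurableType d}
  {R : realType} (P : probability T R) (X : int -> T -> int) : Prop :=
  forall A, path_measurable A ->
    P (path_of X @^-1` (shift @^-1` A)) = P (path_of X @^-1` A).

Definition ergodic {d : measure_display} {T : measurableType d}
  {R : realType} (P : probability T R) (X : int -> T -> int) : Prop :=
  forall A, path_measurable A -> (shift @^-1` A = A) ->
    P (path_of X @^-1` A) = 0%E \/ P (path_of X @^-1` A) = 1%E.

(* Main.v *)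
Require Import Defs.
From HB Require Import structures.
From mathcomp Require Import all_boot all_order all_algebra.
From mathcomp Require Import all_classical all_reals all_analysis.
From mathcomp Require Import zify ring lra.
From Stdlib Require Import Relations.
Import Order.TTheory GRing.Theory Num.Theory.
Local Open Scope classical_set_scope.
Local Open Scope ring_scope.

Definition ps (y : int -> int) (i : int) (m : nat) : int :=
  \sum_(k < m) y (i + k%:Z).

Definition root (y : int -> int) (i : int) : Prop :=
  forall m : nat, (0 < m)%N -> ps y i m < 0.

Lemma psum_ps y i n : psum y i n = ps y i `|n - i|%N.
Proof. by []. Qed.

Lemma ps_add y i a b : ps y i (a + b) = ps y i a + ps y (i + a%:Z) b.
Proof.
rewrite /ps big_split_ord /=; congr (_ + _); apply: eq_bigr => k _ /=.
by congr (y _); rewrite PoszD addrA.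
Qed.

Lemma ps_S y i m : ps y i m.+1 = ps y i m + y (i + m%:Z).
Proof. by rewrite /ps big_ord_recr. Qed.

Lemma minimal y j m : (0 < m)%N -> 0 <= ps y j m ->
  exists m1, [/\ (0 < m1)%N, (m1 <= m)%N, 0 <= ps y j m1 &
     forall m', (0 < m')%N -> (m' < m1)%N -> ps y j m' < 0].
Proof.
move=> m0 hm.
have ex : exists n, (0 < n)%N && (0 <= ps y j n) by exists m; rewrite m0 hm.
case: (ex_minnP ex) => m1 /andP[h1 h2] hmin.
exists m1; split => //.
  by apply: hmin; rewrite m0 hm.
move=> m' h0 hlt; rewrite ltNge; apply/negP => hge.
have := hmin m'; rewrite h0 hge => /(_ isT); rewrite leqNgt hlt //.
Qed.

Lemma edge_of y j m : (0 < m)%N -> 0 <= ps y j m ->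
  (forall m', (0 < m')%N -> (m' < m)%N -> ps y j m' < 0) ->
  record_edge y j (j + m%:Z).
Proof.
move=> m0 hm hmin; split.
- by rewrite ltrDl ltz_nat.
- by rewrite psum_ps addrAC subrr add0r absz_nat.
- move=> n h1 h2; rewrite psum_ps; apply: hmin; lia.
Qed.
Arguments edge_of {y j m}.

Lemma conn_edge y i j : record_edge y i j -> record_conn y i j.
Proof. by move=> h; apply: rst_step. Qed.

Lemma conn_trans y i j k : record_conn y i j -> record_conn y j k -> record_conn y i k.
Proof. by apply: rst_trans. Qed.

Lemma conn_sym y i j : record_conn y i j -> record_conn y j i.
Proof. by apply: rst_sym. Qed.
Arguments conn_edge {y i j}.
Arguments conn_trans {y i j k}.
Arguments conn_sym {y i j}.
Lemma nonroot_conn y i : ~ root y i -> record_conn y i (i + 1).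
Proof.
move=> /existsNP [m] /not_implyP [m0] /negP; rewrite -leNgt => hm.
have [m1 [h10 h1m h1p hmin]] := minimal y i m m0 hm.
have key : forall t j, (m1 - j = t)%N -> (0 < j)%N -> (j <= m1)%N ->
    record_conn y (i + j%:Z) (i + m1%:Z).
  elim/ltn_ind => t IH j ht j0 jm.
  case: (ltngtP j m1) jm => // [jlt|->] _; last exact: rst_refl.
  have hj := hmin j j0 jlt.
  have hpos : 0 <= ps y (i + j%:Z) (m1 - j).
    have := ps_add y i j (m1 - j); rewrite subnKC; last exact: ltnW.
    move=> e; rewrite e in h1p.
    have : ps y i j + ps y (i + j%:Z) (m1 - j) >= 0 by [].
    move: hj; set a := ps y i j; set b := ps y _ _ => ha hb.
    lia.
  have h0 : (0 < m1 - j)%N by rewrite subn_gt0.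
  have [m2 [h20 h2m h2p hmin2]] := minimal y (i + j%:Z) (m1 - j) h0 hpos.
  apply: conn_trans (conn_edge (edge_of h20 h2p hmin2)) _.
  have -> : i + j%:Z + m2%:Z = i + (j + m2)%N%:Z by rewrite PoszD addrA.
  have h3 : (j + m2 <= m1)%N by rewrite -leq_subRL // ltnW.
  apply: (IH (m1 - (j + m2))%N).
  - rewrite -ht; lia.
  - by [].
  - by rewrite addn_gt0 j0.
  - exact: h3.
apply: conn_trans (conn_edge (edge_of h10 h1p hmin)) _.
apply: conn_sym; exact: (key (m1 - 1)%N 1%N).
Qed.
Lemma barrier y r i j : root y r -> record_edge y i j -> i <= r -> j <= r.
Proof.
move=> hr [hij hp hmin] hir; rewrite leNgt; apply/negP => hrj.
have hb : (0 < `|j - r|)%N by lia.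
have := hr _ hb.
case: (ltgtP i r) hir => // [hlt|heq] _; last first.
  by rewrite -heq; rewrite psum_ps in hp; lia.
have h1 := hmin r hlt hrj.
rewrite !psum_ps in hp h1.
have e : `|j - i|%N = (`|r - i| + `|j - r|)%N by lia.
rewrite e ps_add in hp.
have e2 : i + (`|r - i|%N)%:Z = r by lia.
rewrite e2 in hp; lia.
Qed.

Lemma conn_inv y (Q : int -> Prop) :
  (forall i j, record_edge y i j -> (Q i <-> Q j)) ->
  forall a b, record_conn y a b -> (Q a <-> Q b).
Proof.
move=> hQ a b; elim.
- by move=> x z /hQ.
- by [].
- by move=> x z _ [h1 h2]; split.
- by move=> x z w _ [h1 h2] _ [h3 h4]; split => h; auto.
Qed.

Lemma conn_bound y r a b : root y r -> record_conn y a b -> (a <= r <-> b <= r).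
Proof.
move=> hr; apply: (conn_inv y (fun x => x <= r)) => i j he; split => h.
- exact: barrier hr he h.
- have [hij _ _] := he; apply: le_trans (ltW hij) h.
Qed.

Lemma no_root_connected y : (forall i, ~ root y i) -> record_graph_connected y.
Proof.
move=> h.
have step : forall i (n : nat), record_conn y i (i + n%:Z).
  move=> i; elim => [|n IH]; first by rewrite addr0; exact: rst_refl.
  apply: conn_trans IH _; rewrite -addn1 PoszD addrA; exact: nonroot_conn.
move=> i j; case: (lerP i j) => hij.
  have -> : j = i + (`|j - i|%N)%:Z by lia.
  exact: step.
apply: conn_sym; have -> : i = j + (`|i - j|%N)%:Z by lia.
exact: step.
Qed.

Lemma finite_interval (a b : int) : finite_set [set j : int | a < j <= b].
Proof.
apply: (@sub_finite_set _ _ ((fun k : nat => a + k%:Z) @` `I_(`|b - a|%N.+1))).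
  move=> j /= /andP[h1 h2]; exists `|j - a|%N; rewrite /= /in_mem /=; lia.
exact/finite_image/finite_II.
Qed.

Lemma roots_finite y : (forall i : int, exists a b : int, [/\ root y a, root y b, a < i & i <= b]) ->
  record_components_finite y.
Proof.
move=> h i; have [a [b [ha hb hai hib]]] := h i.
apply: sub_finite_set (finite_interval a b) => j /= hc.
have := conn_bound y b i j hb hc; have := conn_bound y a i j ha hc.
move=> [h1 h2] [h3 h4]; apply/andP; split.
  rewrite ltNge; apply/negP => /h2; lia.
exact: h3.
Qed.
Lemma roots_unbounded y r : root y r ->
  (forall k, root y k -> exists n, k < n /\ root y n) ->
  (forall k, root y k -> exists n, n < k /\ root y n) ->
  forall i : int, exists a b : int, [/\ root y a, root y b, a < i & i <= b].
Proof.
move=> hr hup hdn.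
have up : forall m : nat, exists b, r + m%:Z <= b /\ root y b.
  elim => [|m [b [hb1 hb2]]]; first by exists r; rewrite addr0.
  have [n [hn1 hn2]] := hup b hb2; exists n; split => //; lia.
have dn : forall m : nat, exists a, a <= r - m%:Z /\ root y a.
  elim => [|m [b [hb1 hb2]]]; first by exists r; rewrite subr0.
  have [n [hn1 hn2]] := hdn b hb2; exists n; split => //; lia.
move=> i.
have [b [hb1 hb2]] := up `|i - r|%N.
have [a [ha1 ha2]] := dn `|i - r|%N.+1.
exists a, b; split => //; lia.
Qed.

Definition Blast k := [set y : int -> int | root y k /\ forall n, k < n -> ~ root y n].
Definition Bfirst k := [set y : int -> int | root y k /\ forall n, n < k -> ~ root y n].
Definition NoRoot := [set y : int -> int | forall i, ~ root y i].

Lemma good_finite y : ~ NoRoot y -> (forall k, ~ Blast k y) -> (forall k, ~ Bfirst k y) ->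
  record_components_finite y.
Proof.
move=> /existsNP [r /contrapT hr] hl hf; apply: roots_finite.
apply: (@roots_unbounded y r hr).
- move=> k hk; have := hl k; rewrite /Blast /= => /not_andP [//|] /existsNP [n].
  by move=> /not_implyP [hn /contrapT hn']; exists n.
- move=> k hk; have := hf k; rewrite /Bfirst /= => /not_andP [//|] /existsNP [n].
  by move=> /not_implyP [hn /contrapT hn']; exists n.
Qed.

Lemma ps_shift (y : int -> int) (i : int) (m : nat) : ps (Defs.shift y) i m = ps y (i + 1) m.
Proof. by apply: eq_bigr => k _; rewrite /Defs.shift addrAC. Qed.

Lemma root_shift (y : int -> int) (i : int) : root (Defs.shift y) i = root y (i + 1).
Proof.
apply: propext; split => h m hm; [rewrite -ps_shift | rewrite ps_shift]; exact: h.
Qed.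

Lemma shift_Blast k : Defs.shift @^-1` Blast k = Blast (k + 1).
Proof.
apply/seteqP; split => y /=; rewrite /Blast /= root_shift => -[h1 h2]; split => //.
- move=> n hn; have := h2 (n - 1); rewrite root_shift subrK; apply; lia.
- move=> n hn; rewrite root_shift; apply: h2; lia.
Qed.

Lemma shift_Bfirst k : Defs.shift @^-1` Bfirst k = Bfirst (k + 1).
Proof.
apply/seteqP; split => y /=; rewrite /Bfirst /= root_shift => -[h1 h2]; split => //.
- move=> n hn; have := h2 (n - 1); rewrite root_shift subrK; apply; lia.
- move=> n hn; rewrite root_shift; apply: h2; lia.
Qed.

Lemma shift_NoRoot : Defs.shift @^-1` NoRoot = NoRoot.
Proof.
apply/seteqP; split => y /= h i.
- by have := h (i - 1); rewrite root_shift subrK.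
- by rewrite root_shift.
Qed.
HB.instance Definition _ := isPointed.Build int 0%R.
Local Notation S := (g_sigma_algebraType cylinders).

Lemma mcyl (n k : int) : measurable ([set y | y n = k] : set S).
Proof. by apply: sub_sigma_algebra; exists n, k. Qed.

Lemma mexists (Q : int -> set S) : (forall v, measurable (Q v)) ->
  measurable [set y : S | exists v, Q v y].
Proof.
move=> hQ.
have -> : [set y : S | exists v, Q v y] =
    \bigcup_(n : nat) Q n%:Z `|` \bigcup_(n : nat) Q (- n%:Z).
  apply/seteqP; split => y /=.
  - move=> [v hv]; case: v hv => n hn; first by left; exists n.
    by right; exists n.+1 => //; rewrite NegzE.
  - by move=> [[n _ h]|[n _ h]]; eexists; exact: h.
by apply: measurableU; apply: bigcupT_measurable => n.
Qed.

Lemma mexists_nat (Q : nat -> set S) : (forall v, measurable (Q v)) ->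
  measurable [set y : S | exists v, Q v y].
Proof.
move=> hQ.
have -> : [set y : S | exists v, Q v y] = \bigcup_(n : nat) Q n.
  by apply/seteqP; split => y /= [n]; [exists n | move=> _; exists n].
exact: bigcupT_measurable.
Qed.

Lemma mcond (b : Prop) (A : set S) : measurable A -> measurable [set y : S | b /\ A y].
Proof.
move=> hA; case: (pselect b) => hb.
  by have -> : [set y : S | b /\ A y] = A by apply/seteqP; split => y /= => [[]|]//.
by have -> : [set y : S | b /\ A y] = set0 by apply/seteqP; split => y /= => [[]|]//.
Qed.

Lemma mnot (A : set S) : measurable A -> measurable [set y : S | ~ A y].
Proof. exact: measurableC. Qed.

Lemma mand (A B : set S) : measurable A -> measurable B -> measurable [set y : S | A y /\ B y].
Proof. exact: measurableI. Qed.

Lemma mps_eq i m c : measurable [set y : S | ps y i m = c].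
Proof.
elim: m c => [|m IH] c.
  case: (eqVneq c 0) => [->|hc].
    by have -> : [set y : S | ps y i 0 = 0] = setT by apply/seteqP; split => y //= _; rewrite /ps big_ord0.
  have -> : [set y : S | ps y i 0 = c] = set0; last by [].
  by apply/seteqP; split => y //=; rewrite /ps big_ord0 => h; move: hc; rewrite -h eqxx.
have -> : [set y : S | ps y i m.+1 = c] =
   [set y : S | exists v, [set y : S | ps y i m = c - v /\ y (i + m%:Z) = v] y].
  apply/seteqP; split => y /=; rewrite ps_S.
  - by move=> h; exists (y (i + m%:Z)); split => //; rewrite -h addrK.
  - by move=> [v [h1 h2]]; rewrite h1 h2 subrK.
apply: mexists => v; apply: mand; [exact: IH | exact: mcyl].
Qed.

Lemma mps_lt0 i m : measurable [set y : S | ps y i m < 0].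
Proof.
have -> : [set y : S | ps y i m < 0] = [set y : S | exists v, [set y : S | v < 0 /\ ps y i m = v] y].
  apply/seteqP; split => y /=; first by move=> h; exists (ps y i m).
  by move=> [v [h1 ->]].
apply: mexists => v; apply: mcond; exact: mps_eq.
Qed.

Lemma mroot i : measurable [set y : S | root y i].
Proof.
have -> : [set y : S | root y i] = [set y : S | ~ exists m, [set y : S | (0 < m)%N /\ ~ (ps y i m < 0)] y].
  apply/seteqP; split => y /=.
  - by move=> h [m [h1 h2]]; apply: h2; exact: h.
  - move=> h m hm; apply: contrapT => hn; apply: h; by exists m.
apply: mnot; apply: mexists_nat => m; apply: mcond; apply: mnot; exact: mps_lt0.
Qed.

Lemma mNoRoot : measurable (NoRoot : set S).
Proof.
have -> : (NoRoot : set S) = [set y : S | ~ exists i, [set y : S | root y i] y].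
  apply/seteqP; split => y /=; first by move=> h [i hi]; exact: h hi.
  by move=> h i hi; apply: h; exists i.
apply: mnot; apply: mexists => i; exact: mroot.
Qed.

Lemma mBlast k : measurable (Blast k : set S).
Proof.
have -> : (Blast k : set S) = [set y : S | [set y : S | root y k] y /\
     ~ exists n, [set y : S | k < n /\ root y n] y].
  apply/seteqP; split => y /= [h1 h2]; split => //.
  - by move=> [n [hn hr]]; exact: h2 hn hr.
  - by move=> n hn hr; apply: h2; exists n.
apply: mand; first exact: mroot.
apply: mnot; apply: mexists => n; apply: mcond; exact: mroot.
Qed.

Lemma mBfirst k : measurable (Bfirst k : set S).
Proof.
have -> : (Bfirst k : set S) = [set y : S | [set y : S | root y k] y /\
     ~ exists n, [set y : S | n < k /\ root y n] y].
  apply/seteqP; split => y /= [h1 h2]; split => //.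
  - by move=> [n [hn hr]]; exact: h2 hn hr.
  - by move=> n hn hr; apply: h2; exists n.
apply: mand; first exact: mroot.
apply: mnot; apply: mexists => n; apply: mcond; exact: mroot.
Qed.
Lemma shift_const (R : realType) (f : int -> \bar R) :
  (forall k, f (k + 1) = f k) -> forall k, f k = f 0.
Proof.
move=> h.
have hp : forall n : nat, f n%:Z = f 0.
  elim => // n IH; rewrite -addn1 PoszD h //.
have hn : forall n : nat, f (- n%:Z) = f 0.
  elim => // n IH; rewrite -IH -h; congr f; rewrite -addn1 PoszD; ring.
case => n; first exact: hp.
by rewrite NegzE hn.
Qed.

Lemma zero_of_disjoint d (T : measurableType d) (R : realType) (P : probability T R)
  (E : nat -> set T) : (forall n, measurable (E n)) -> trivIset setT E ->
  (forall n, P (E n) = P (E 0%N)) -> P (E 0%N) = 0%E.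
Proof.
move=> mE tE hE.
have hN : forall N : nat, (P (E 0%N) *+ N <= 1)%E.
  move=> N.
  have := @measure_bigsetU _ _ _ P E mE tE N.
  rewrite (eq_bigr (fun _ => P (E 0%N))); last by move=> i _; exact: hE.
  rewrite sumr_const card_ord => hh.
  have hb : (P (\big[setU/set0]_(i < N) E i) <= 1)%E.
    by apply: probability_le1; apply: bigsetU_measurable => i _; exact: mE.
  apply: le_trans hb.
  by rewrite le_eqVlt; apply/orP; left; apply/eqP; symmetry; exact: hh.
have h0 : (0 <= P (E 0%N))%E by exact: measure_ge0.
have h1 : (P (E 0%N) <= 1)%E by have := hN 1%N.
move: h0 h1 hN; case: (P (E 0%N)) => [r| |] //= h0 h1 hN.
  rewrite lee_fin in h0.
  case: (ltrP 0 r) => hr; last by congr EFin; apply/eqP; rewrite eq_le hr h0.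
  have hinv : 0 <= r^-1 by rewrite invr_ge0 ltW.
  have := archi_boundP hinv.
  set N := Num.Def.archi_bound _ => hb.
  have := hN N; rewrite -EFin_natmul lee_fin => hle.
  have : 1 < r *+ N.
    by rewrite -mulr_natr -ltr_pdivrMl // mulr1.
  by rewrite ltNge hle.
Qed.
Lemma int_infinite : ~ finite_set [set: int].
Proof.
move=> h; apply: infinite_nat.
have : finite_set (Posz @^-1` [set: int]).
  by apply: finite_preimage => // a b _ _ []. 
by rewrite preimage_setT.
Qed.

Theorem corollary3p5 (d : measure_display) (T : measurableType d) (R : realType)
  (P : probability T R) (X : int -> T -> int)
  (HX : forall (n k : int), measurable (X n @^-1` [set k]))
  (Hstat : stationary P X) (Herg : ergodic P X) :
  let C1 := {ae P, forall w, record_graph_connected (path_of X w)} in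
  let C2 := {ae P, forall w, record_components_finite (path_of X w)} in
  (C1 \/ C2) /\ ~ (C1 /\ C2).
Proof.
move=> C1 C2.
have mXp : measurable_fun setT (path_of X : T -> S).
  apply: (@measurability _ _ _ _ setT (path_of X : T -> S) cylinders) => //.
  move=> _ [B [n [k ->]] <-]; rewrite setTI; exact: HX n k.
have mpre : forall A : set S, measurable A -> measurable (path_of X @^-1` A).
  by move=> A mA; have := mXp measurableT A mA; rewrite setTI.
have cst : forall F : int -> set S, (forall k, measurable (F k)) ->
    (forall k, Defs.shift @^-1` F k = F (k + 1)) ->
    forall k, P (path_of X @^-1` F k) = P (path_of X @^-1` F 0).
  move=> F mF hF; apply: (@shift_const R (fun k => P (path_of X @^-1` F k))) => k.
  by rewrite -hF; apply: Hstat; exact: mF.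
have null : forall F : int -> set S, (forall k, measurable (F k)) ->
    (forall k, Defs.shift @^-1` F k = F (k + 1)) ->
    (forall i j y, F i y -> F j y -> i = j) ->
    forall k, P (path_of X @^-1` F k) = 0%E.
  move=> F mF hF hdis k; rewrite (cst F mF hF k).
  have := @zero_of_disjoint _ _ _ P (fun n : nat => path_of X @^-1` F n%:Z).
  apply.
  - by move=> n; apply: mpre.
  - by move=> i j _ _ [w [h1 h2]]; have := hdis _ _ _ h1 h2; case.
  - by move=> n; rewrite (cst F mF hF n%:Z).
have disL : forall i j y, Blast i y -> Blast j y -> i = j.
  move=> i j y [h1 h2] [h3 h4]; case: (ltgtP i j) => // hij.
  - by exfalso; exact: h2 hij h3.
  - by exfalso; exact: h4 hij h1.
have disF : forall i j y, Bfirst i y -> Bfirst j y -> i = j.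
  move=> i j y [h1 h2] [h3 h4]; case: (ltgtP i j) => // hij.
  - by exfalso; exact: h4 hij h1.
  - by exfalso; exact: h2 hij h3.
have nL := null Blast mBlast shift_Blast disL.
have nF := null Bfirst mBfirst shift_Bfirst disF.
split.
  case: (Herg NoRoot mNoRoot shift_NoRoot) => hN; [right|left].
  - change (P.-negligible (~` [set w | record_components_finite (path_of X w)])).
    have hneg : forall A : set S, measurable A -> P (path_of X @^-1` A) = 0%E ->
        P.-negligible (path_of X @^-1` A).
      by move=> A mA h0; apply/negligibleP => //; exact: mpre.
    have hB : P.-negligible (\bigcup_(n : nat) (path_of X @^-1` Blast n%:Z `|` path_of X @^-1` Blast (- n%:Z)
        `|` (path_of X @^-1` Bfirst n%:Z `|` path_of X @^-1` Bfirst (- n%:Z)))).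
      apply: negligible_bigcup => n.
      by apply: negligibleU; apply: negligibleU; apply: hneg; rewrite ?nL ?nF //; 
        first [exact: mBlast | exact: mBfirst].
    apply: negligibleS (negligibleU (hneg _ mNoRoot hN) hB).
    move=> w /= hw; apply: contrapT => hn; apply: hw; apply: good_finite.
    + by move=> h; apply: hn; left.
    + move=> k hk; apply: hn; right; case: k hk => n hk.
        by exists n => //; left; left.
      by exists n.+1 => //; left; right; move: hk; rewrite NegzE.
    + move=> k hk; apply: hn; right; case: k hk => n hk.
        by exists n => //; right; left.
      by exists n.+1 => //; right; right; move: hk; rewrite NegzE.
  - change (P.-negligible (~` [set w | record_graph_connected (path_of X w)])).
    exists (~` (path_of X @^-1` NoRoot)); split.
    + by apply: measurableC; exact: (mpre _ mNoRoot).
    + rewrite probability_setC; [by rewrite hN subee | exact: (mpre _ mNoRoot)].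
    + move=> w /= hw hn; apply: hw; exact: no_root_connected.
move=> [h1 h2].
have : P.-negligible (~` [set w | record_graph_connected (path_of X w)] `|`
   ~` [set w | record_components_finite (path_of X w)]) by exact: negligibleU.
move=> [A [mA PA hA]].
have [w hw] : exists w, ~ A w.
  apply: contrapT => hall.
  have hT : A = setT by apply/seteqP; split => // w _; apply: contrapT => hw; apply: hall; exists w.
  by move: PA; rewrite hT probability_setT => /eqP; rewrite onee_eq0.
have hc : record_graph_connected (path_of X w).
  by apply: contrapT => hc; apply: hw; apply: hA; left.
have hf : record_components_finite (path_of X w).
  by apply: contrapT => hc'; apply: hw; apply: hA; right.
apply: int_infinite.
have := hf 0; congr finite_set; apply/seteqP; split => // j _; exact: hc.
Qed.
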